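(* Let $\alpha$ be an increasing sequence in $\{1,\dots,m\}$. For all $a,b\in\mathcal{S}_\alpha$, $$\operatorname{eval}_\alpha(a\cdot b)=\operatorname{eval}_\alpha(a)\cdot\operatorname{eval}_\alpha(b),$$ where on the left $\cdot$ is the (nested) product stream and on the right it is the pointwise product in $\mathcal{T}_\alpha$.
   Context: Fix a semiring $R$ (commutative additive monoid with $0$, multiplicative monoid with $1$, two-sided distributivity, $0\cdot x=x\cdot 0=0$; not necessarily commutative), an integer $m\ge1$, and finite nonempty totally ordered sets $I_1,\dots,I_m$. For an increasing sequence $\alpha=[i_1<\dots<i_n]$ in $\{1,\dots,m\}$, $I_\alpha=I_{i_1}\times\dots\times I_{i_n}$ and $\mathcal{T}_\alpha$ is the set of functions $I_\alpha\to R$ with pointwise operations ($\mathcal{T}_{[]}=R$); $\mathcal{T}_{i::\alpha}$ is identified with functions $I_i\to\mathcal{T}_\alpha$ by currying, where $i::\alpha$ is the sequence with head $i$ and tail $\alpha$. An indexed stream of type $I\to V$ is a tuple $(S,q,\iota,\nu,\mathrm{ready},\delta)$: state space $S$, current state $q$, $\iota:S\to I$, $\nu:S\to V$, $\mathrm{ready}:S\to\{\bot,\top\}$, $\delta:S\to S$; ''the stream $r$'' is the same tuple with current state $r$. $r$ is reachable from $q$ if $r=\delta^k(q)$, $k\ge0$; terminal if $\delta(r)=r$. $q$ is simple if: (Finite) some reachable state is terminal and every reachable terminal $t$ has $\mathrm{ready}(t)=\bot$; (Monotonic) $\iota(r)\le\iota(\delta(r))$ for reachable $r$; (Reduced) if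 $r$ reachable from $q$, $s$ reachable from $r$, both ready and $\iota(r)=\iota(s)$, then $r=s$. For $x\in I$ and $w$ in a commutative monoid $M$, $(x\mapsto w)$ is the function $I\to M$ equal to $w$ at $x$ and $0$ elsewhere. For a stream $q$ with finitely many reachable states and $g:V\to M$, $\llbracket q\rrbracket_g=\sum_{r\text{ reachable from }q,\ \mathrm{ready}(r)=\top}(\iota(r)\mapsto g(\nu(r)))$ (sum over the set of reachable states). Nested streams: $\mathcal{S}_{[]}=R$; $\mathcal{S}_{i::\alpha}$ = simple streams of type $I_i\to\mathcal{S}_\alpha$. $\operatorname{eval}_{[]}(q)=q$; $\operatorname{eval}_{i::\alpha}(q)=\llbracket q\rrbracket_{\operatorname{eval}_\alpha}$. Ordering: $a\le b$ iff $\iota(a)<\iota(b)$ or ($\iota(a)=\iota(b)$ and $\mathrm{ready}(a)=\bot$). Product stream of $a,b$ of type $I\to V$ with multiplication on $V$: state space $S_a\times S_b$, current state $(a,b)$, $\iota(a,b)=\max(\iota(a),\iota(b))$, $\nu(a,b)=\nu(a)\cdot\nu(b)$, $\mathrm{ready}(a,b)=\mathrm{ready}(a)\wedge\mathrm{ready}(b)\wedge(\iota(a)=\iota(b))$, $\delta(a,b)=(\delta(a),b)$ if $a\le b$ and $(a,\delta(b))$ otherwise. Multiplication on $\mathcal{S}_{[]}=R$ is the semiring product, and on $\mathcal{S}_{i::\alpha}$ it is the product stream using the multiplication of $\mathcal{S}_\alpha$ on values. *)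

(* Defs.v *)
From HB Require Import structures.
From mathcomp Require Import all_boot all_order all_algebra.
From mathcomp Require Import boolp classical_sets functions fsbigop.

Set Implicit Arguments.
Unset Strict Implicit.
Unset Printing Implicit Defensive.

Import Order.TTheory GRing.Theory.
Local Open Scope ring_scope.
Local Open Scope classical_set_scope.

(* A stream is a tuple (S, q, iota, nu, ready, delta).  The state space  *)
(* S is an arbitrary type (given as a choiceType, which is harmless      *)
(* classically; it is needed to sum over sets of states).                *)
Record stream (I V : Type) := Stream {
  St : choiceType;
  cur : St;
  idx : St -> I;
  val : St -> V;
  rdy : St -> bool;
  nxt : St -> St }.

Arguments Stream {I V}.

Section Streams.
Context {d : Order.disp_t} {I : orderType d} {V : Type}.
Implicit Types (s : stream I V).

Definition at_state s (r : St s) : stream I V :=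
  Stream (St s) r (@idx _ _ s) (@val _ _ s) (@rdy _ _ s) (@nxt _ _ s).

Definition reachable s (q r : St s) : Prop := exists k : nat, r = iter k (@nxt _ _ s) q.

Definition terminal s (r : St s) : Prop := nxt r = r.

Definition finite_stream s : Prop :=
  (exists2 t, reachable (cur s) t & terminal t) /\
  (forall t, reachable (cur s) t -> terminal t -> rdy t = false).

Definition monotonic_stream s : Prop :=
  forall r, reachable (cur s) r -> (idx r <= idx (nxt r))%O.

Definition reduced_stream s : Prop :=
  forall r t, reachable (cur s) r -> reachable r t ->
    rdy r -> rdy t -> idx r = idx t -> r = t.

Definition simple s : Prop :=
  [/\ finite_stream s, monotonic_stream s & reduced_stream s].

Definition single {M : nmodType} (x : I) (w : M) : I -> M :=
  fun y => if y == x then w else 0.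

Definition sem {M : nmodType} s (g : V -> M) : I -> M :=
  \sum_(r \in [set r | reachable (cur s) r /\ rdy r]) single (idx r) (g (val r)).

Definition state_le (W1 W2 : Type) (a : stream I W1) (b : stream I W2)
  (x : St a) (y : St b) : bool :=
  ((idx x < idx y)%O || ((idx x == idx y) && ~~ rdy x)).

Definition prod_stream (mulV : V -> V -> V) (a b : stream I V) : stream I V :=
  Stream (Choice.clone (St a * St b)%type _) (cur a, cur b)
    (fun p => Order.max (idx p.1) (idx p.2))
    (fun p => mulV (val p.1) (val p.2))
    (fun p => [&& rdy p.1, rdy p.2 & idx p.1 == idx p.2])
    (fun p => if state_le p.1 p.2 then (nxt p.1, p.2) else (p.1, nxt p.2)).

End Streams.

(* Nested tensors and nested streams, for a semiring R and finite        *)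
(* nonempty totally ordered sets I_1, ..., I_m (indexed here by 'I_m,    *)
(* i.e. 0-based).                                                        *)
Section Nested.
Context (R : pzSemiRingType) (m : nat) (dI : 'I_m -> Order.disp_t)
  (I : forall i : 'I_m, finOrderType (dI i)).

(* T_alpha : functions I_alpha -> R, curried *)
Fixpoint Ten (al : seq 'I_m) : nmodType :=
  match al with
  | [::] => R
  | i :: be => GRing.Nmodule.clone (I i -> Ten be) _
  end.

Fixpoint ten_mul (al : seq 'I_m) : Ten al -> Ten al -> Ten al :=
  match al return Ten al -> Ten al -> Ten al with
  | [::] => fun x y => (x * y)%R
  | i :: be => fun f g => fun x => ten_mul (f x) (g x)
  end.

Fixpoint RStr (al : seq 'I_m) : Type :=
  match al with
  | [::] => R
  | i :: be => stream (I i) (RStr be)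
  end.

Fixpoint in_S (al : seq 'I_m) : RStr al -> Prop :=
  match al return RStr al -> Prop with
  | [::] => fun _ => True
  | i :: be => fun q => simple q /\ forall s : St q, in_S (val s)
  end.

Fixpoint str_mul (al : seq 'I_m) : RStr al -> RStr al -> RStr al :=
  match al return RStr al -> RStr al -> RStr al with
  | [::] => fun x y => (x * y)%R
  | i :: be => fun a b => prod_stream (@str_mul be) a b
  end.

Fixpoint eval (al : seq 'I_m) : RStr al -> Ten al :=
  match al return RStr al -> Ten al with
  | [::] => fun q => q
  | i :: be => fun q => sem q (@eval be)
  end.

End Nested.

(* Main.v *)
Require Import Defs.
From HB Require Import structures.
From mathcomp Require Import all_boot all_order all_algebra.
From mathcomp Require Import boolp classical_sets functions fsbigop.
From mathcomp Require Import cardinality.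
From mathcomp Require Import zify.
Set Implicit Arguments.
Unset Strict Implicit.
Unset Printing Implicit Defensive.
Import Order.TTheory GRing.Theory.
Local Open Scope ring_scope.
Local Open Scope classical_set_scope.

Section S.
Context {d : Order.disp_t} {I : orderType d} {V : Type}.
Implicit Types (s : stream I V).

Lemma reach_refl s (q : St s) : reachable q q.
Proof. by exists 0%N. Qed.

Lemma reach_nxt s (q r : St s) : reachable q r -> reachable q (nxt r).
Proof. by case=> k ->; exists k.+1; rewrite iterS. Qed.

Lemma reach_trans s (q r t : St s) : reachable q r -> reachable r t -> reachable q t.
Proof. by case=> k -> [k' ->]; exists (k' + k)%N; rewrite iterD. Qed.

Lemma reach_iter s (c : St s) k i : (k <= i)%N -> reachable (iter k (@nxt _ _ s) c) (iter i (@nxt _ _ s) c).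
Proof. by move=> ki; exists (i - k)%N; rewrite -iterD subnK. Qed.

Lemma reach_tot s (c r t : St s) : reachable c r -> reachable c t ->
  reachable r t \/ reachable t r.
Proof.
case=> k -> [k' ->]; case: (leqP k k') => h.
  by left; apply: reach_iter.
by right; apply: reach_iter; apply: ltnW.
Qed.

Lemma mono_reach s (r t : St s) : monotonic_stream s -> reachable (cur s) r ->
  reachable r t -> (idx r <= idx t)%O.
Proof.
move=> hm hr [k ->]; elim: k => [|k IH] //=.
apply: le_trans IH _; apply: hm; apply: reach_trans hr _; by exists k.
Qed.

Lemma uniq_ready s (r t : St s) : reduced_stream s -> reachable (cur s) r ->
  reachable (cur s) t -> rdy r -> rdy t -> idx r = idx t -> r = t.
Proof.
move=> hred hr ht rr rt e; case: (reach_tot hr ht) => h.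
  exact: hred.
by apply/esym; apply: hred.
Qed.

Lemma finite_reach s : finite_stream s -> finite_set [set r | reachable (cur s) r].
Proof.
case=> -[t [k ->] tt] _.
have H n : iter (n + k) (@nxt _ _ s) (cur s) = iter k (@nxt _ _ s) (cur s).
  by elim: n => //= n IH; rewrite IH.
apply: (@sub_finite_set _ _ ((fun n => iter n (@nxt _ _ s) (cur s)) @` `I_k.+1)).
  move=> r [n ->]; case: (leqP n k) => h.
    by exists n => //=; rewrite /= ltnS.
  exists k; first by rewrite /= ltnS.
  by rewrite -(subnK (ltnW h)) H.
exact/finite_image/finite_II.
Qed.

Lemma sem_at {M : nmodType} s (g : V -> M) x :
  finite_set [set r | reachable (cur s) r] ->
  sem s g x = \sum_(r \in [set r | reachable (cur s) r /\ rdy r])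
     (if x == idx r then g (Defs.val r) else 0).
Proof.
move=> hf.
have fin : finite_set [set r | reachable (cur s) r /\ rdy r].
  by apply: sub_finite_set hf => r [].
rewrite /sem fsbig_finite // fct_sumE [RHS]fsbig_finite //.
Qed.

Lemma sem_one {M : nmodType} s (g : V -> M) x (r0 : St s) :
  finite_set [set r | reachable (cur s) r] -> reachable (cur s) r0 -> rdy r0 -> idx r0 = x ->
  (forall r, reachable (cur s) r -> rdy r -> idx r = x -> r = r0) ->
  sem s g x = g (Defs.val r0).
Proof.
move=> hf h0 r0r e0 hu; rewrite sem_at //.
rewrite -(fsbig_widen [set r0]); first by rewrite fsbig_set1 e0 eqxx.
  by move=> r -> .
move=> r [[hr rr]] /= ner; case: eqP => // e; exfalso; apply: ner.
exact: hu.
Qed.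

Lemma sem_none {M : nmodType} s (g : V -> M) x :
  finite_set [set r | reachable (cur s) r] ->
  (forall r, reachable (cur s) r -> rdy r -> idx r = x -> False) ->
  sem s g x = 0.
Proof.
move=> hf hn; rewrite sem_at //; apply: fsbig1 => r [hr rr].
by case: eqP => // e; exfalso; apply: (hn r).
Qed.


Section P.
Variables (mulV : V -> V -> V) (a b : stream I V).
Local Notation P := (prod_stream mulV a b).

Lemma prod_reach (p : St P) : reachable (cur P) p ->
  reachable (cur a) p.1 /\ reachable (cur b) p.2.
Proof.
case=> k ->; elim: k => [|k [IH1 IH2]]; first by split; apply: reach_refl.
rewrite iterS /=; case: ifP => _ /=; split => //; exact: reach_nxt.
Qed.

Lemma prod_finite : finite_stream a -> finite_stream b ->
  finite_set [set p : St P | reachable (cur P) p].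
Proof.
move=> fa fb.
apply: (@sub_finite_set _ _ ([set r | reachable (cur a) r] `*` [set r | reachable (cur b) r])).
  by move=> p /prod_reach.
exact: finite_setX (finite_reach fa) (finite_reach fb).
Qed.

Lemma prod_exists (i j : nat) :
  monotonic_stream a -> reduced_stream a -> monotonic_stream b ->
  let ra := iter i (@nxt _ _ a) (cur a) in
  let rb := iter j (@nxt _ _ b) (cur b) in
  rdy ra -> rdy rb -> idx ra = idx rb ->
  reachable (cur P) ((ra, rb) : St P).
Proof.
move=> ma rda mb ra rb hra hrb e.
have sleA (s2 : St b) k2 : (k2 <= j)%N -> s2 = iter k2 (@nxt _ _ b) (cur b) ->
    state_le ra s2 = false.
  move=> hk ->; rewrite /state_le hra andbF orbF le_gtF // e.
  apply: mono_reach => //; first by exists k2.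
  exact: reach_iter.
suff H n : forall k1 k2, (k1 <= i)%N -> (k2 <= j)%N -> (i - k1 + (j - k2))%N = n ->
    reachable (cur P) ((iter k1 (@nxt _ _ a) (cur a), iter k2 (@nxt _ _ b) (cur b)) : St P) ->
    reachable (cur P) ((ra, rb) : St P).
  by apply: (H _ 0%N 0%N) => //; exact: reach_refl.
elim: n => [|n IH] k1 k2 h1 h2 hn hr.
  have e1 : k1 = i by lia.
  have e2 : k2 = j by lia.
  by move: hr; rewrite e1 e2.
have hr' := reach_nxt hr.
move: hr'; rewrite /= -!iterS.
case: ifP => hle.
  have lt1 : (k1 < i)%N.
    rewrite ltn_neqAle h1 andbT; apply/negP => /eqP ek.
    by move: hle; rewrite ek (sleA _ k2).
  by move=> hr2; apply: (IH k1.+1 k2) => //; lia.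
case: (ltnP k2 j) => lt2.
  by move=> hr2; apply: (IH k1 k2.+1) => //; lia.
have ek : k2 = j by lia.
move=> _.
have le1 : (idx (iter k1 (@nxt _ _ a) (cur a)) <= idx ra)%O.
  by apply: mono_reach => //; [exists k1 | exact: reach_iter].
move: hle; rewrite ek -/rb /state_le -e.
rewrite lt_neqAle le1 andbT.
case: eqP => // e1 /= hr1.
have ea : iter k1 (@nxt _ _ a) (cur a) = ra.
  apply: rda => //; [by exists k1 | exact: reach_iter | exact: negbFE].
by move: hr; rewrite ea ek.
Qed.

End P.
End S.

Section N.
Context (R : pzSemiRingType) (m : nat) (dI : 'I_m -> Order.disp_t)
  (I : forall i : 'I_m, finOrderType (dI i)).

Lemma ten_mul0l (al : seq 'I_m) (y : Ten R I al) : ten_mul 0 y = 0.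
Proof.
elim: al y => [|i be IH] y /=; first exact: mul0r.
by apply/funext => x; apply: IH.
Qed.

Lemma ten_mul0r (al : seq 'I_m) (y : Ten R I al) : ten_mul y 0 = 0.
Proof.
elim: al y => [|i be IH] y /=; first exact: mulr0.
by apply/funext => x; apply: IH.
Qed.

Lemma main_gen (al : seq 'I_m) (a b : RStr R I al) :
  in_S a -> in_S b -> eval (str_mul a b) = ten_mul (eval a) (eval b).
Proof.
elim: al a b => [|i be IH] a b ha hb //=.
case: ha => -[fa ma rda] va; case: hb => -[fb mb rdb] vb.
apply/funext => x.
set P := prod_stream _ a b.
have finP := prod_finite (@str_mul R m dI I be) fa fb.
case: (pselect (exists r, reachable (cur a) r /\ rdy r /\ idx r = x)); last first.
  move=> na.
  rewrite (sem_none _ (finite_reach fa)); last by move=> r hr rr ex; apply: na; exists r.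
  rewrite ten_mul0l (sem_none _ finP) // => p /prod_reach [h1 h2] /= /and3P [r1 r2 /eqP e12].
  by rewrite -e12 maxxx => ex; apply: na; exists p.1.
case=> ra [hra [rra era]].
case: (pselect (exists r, reachable (cur b) r /\ rdy r /\ idx r = x)); last first.
  move=> nb.
  rewrite [sem b _ x](sem_none _ (finite_reach fb)); last by move=> r hr rr ex; apply: nb; exists r.
  rewrite ten_mul0r (sem_none _ finP) // => p /prod_reach [h1 h2] /= /and3P [r1 r2 /eqP e12].
  by rewrite e12 maxxx => ex; apply: nb; exists p.2.
case=> rb [hrb [rrb erb]].
have ua := uniq_ready rda hra.
have ub := uniq_ready rdb hrb.
rewrite (sem_one _ (finite_reach fa) hra rra era); last first.
  by move=> r hr rr er; apply/esym/ua => //; rewrite er.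
rewrite (sem_one _ (finite_reach fb) hrb rrb erb); last first.
  by move=> r hr rr er; apply/esym/ub => //; rewrite er.
have hP : reachable (cur P) ((ra, rb) : St P).
  case: hra => k1 ek1; case: hrb => k2 ek2.
  have := @prod_exists _ _ _ (@str_mul R m dI I be) a b k1 k2 ma rda mb.
  by rewrite -ek1 -ek2; apply => //; rewrite era erb.
rewrite (sem_one (r0 := ((ra, rb) : St P)) _ finP hP).
- rewrite /P /=; exact: (IH _ _ (va ra) (vb rb)).
- by rewrite /P /= rra rrb era erb eqxx.
- by rewrite /P /= era erb maxxx.
move=> [p1 p2] hp; rewrite /P /= => /and3P [r1 r2 /eqP e12]; rewrite -e12 maxxx => ex.
case: (prod_reach hp) => /= h1 h2.
have -> : p1 = ra by apply/esym/ua => //; rewrite ex.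
have -> : p2 = rb by apply/esym/ub => //; rewrite -e12 ex.
by [].
Qed.

End N.

Theorem mainTheorem6 (R : pzSemiRingType) (m : nat) (dI : 'I_m -> Order.disp_t)
    (I : forall i : 'I_m, finOrderType (dI i))
    (hm : (0 < m)%N) (hI : forall i : 'I_m, (0 < #|I i|)%N)
    (al : seq 'I_m) (hal : sorted (fun i j : 'I_m => (i < j)%N) al)
    (a b : RStr R I al) :
  in_S a -> in_S b ->
  eval (str_mul a b) = ten_mul (eval a) (eval b).
Proof. exact: main_gen. Qed.
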